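(* Let $X$ be a $T_1$ space and $\mathcal{P}$ an ideal of closed subsets of $X$ containing every singleton subset of $X$. Then $C(X)_\mathcal{P}$ is a Noetherian ring if and only if $X$ is finite.
   Context: An ideal of closed subsets of $X$ is a family $\mathcal{P}$ of closed subsets closed under finite unions and under passing to closed subsets. $D_f$ is the set of discontinuity points of $f\in\mathbb{R}^X$; $C(X)_\mathcal{P}=\{f\in\mathbb{R}^X\colon\overline{D_f}\in\mathcal{P}\}$ with pointwise operations. *)

(* Defs.v *)
From HB Require Import structures.
From mathcomp Require Import all_boot all_order all_algebra.
From mathcomp Require Import all_classical all_reals all_analysis.
Set Implicit Arguments. Unset Strict Implicit. Unset Printing Implicit Defensive.
Import Order.TTheory GRing.Theory Num.Theory.
Import numFieldTopology.Exports numFieldNormedType.Exports.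
Local Open Scope classical_set_scope.
Local Open Scope ring_scope.

Definition closed_ideal (X : topologicalType) (P : set (set X)) : Prop :=
  [/\ (forall A, P A -> closed A),
      P set0,
      (forall A B, P A -> P B -> P (A `|` B)) &
      (forall A B, P A -> closed B -> B `<=` A -> P B)].

Definition discont (X : topologicalType) (R : realType) (f : X -> R) : set X :=
  [set x : X | ~ {for x, continuous f}].

(* C(X)_P as a subset of R^X (with pointwise operations) *)
Definition CP (X : topologicalType) (R : realType) (P : set (set X)) : set (X -> R) :=
  [set f | P (closure (discont f))].

Definition ring_ideal (X : Type) (R : realType) (S I : set (X -> R)) : Prop :=
  [/\ I `<=` S,
      I (fun _ => 0),
      (forall a b, I a -> I b -> I (fun x => a x - b x)) &
      (forall r a, S r -> I a -> I (fun x => r x * a x))].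

Definition noetherian_sub (X : Type) (R : realType) (S : set (X -> R)) : Prop :=
  forall I : nat -> set (X -> R),
    (forall n, ring_ideal S (I n)) ->
    (forall n, I n `<=` I n.+1) ->
    exists N : nat, forall n : nat, (N <= n)%N -> I n = I N.

(* Main.v *)
Require Import Defs.
From mathcomp Require Import all_boot all_order all_algebra.
From mathcomp Require Import all_classical all_reals all_analysis.
Import Order.TTheory GRing.Theory Num.Theory.
Local Open Scope classical_set_scope.
Local Open Scope ring_scope.

Section S.
Variables (R : realType) (X : topologicalType) (P : set (set X)).
Hypothesis T1 : accessible_space X.
Hypotheses (Pcl : forall A, P A -> closed A) (P0 : P set0)
  (PU : forall A B, P A -> P B -> P (A `|` B))
  (Psub : forall A B, P A -> closed B -> B `<=` A -> P B)
  (P1 : forall x : X, P [set x]).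

Lemma seq_cons_set (y : X) (s : seq X) :
  [set x | x \in y :: s] = [set y] `|` [set x | x \in s].
Proof.
apply/seteqP; split => x /=; rewrite in_cons.
  by case/orP => [/eqP ->|h]; [left|right].
by case => [->|h]; rewrite ?eqxx ?h ?orbT.
Qed.

Lemma seq_set0 : [set x : X | x \in [::]] = set0.
Proof. by apply/seteqP; split => x. Qed.

Lemma closed_seq (s : seq X) : closed [set x | x \in s].
Proof.
elim: s => [|y s IH]; first by rewrite seq_set0; exact: closed0.
rewrite seq_cons_set; apply: closedU => //; exact: accessible_closed_set1.
Qed.

Lemma P_seq (s : seq X) : P [set x | x \in s].
Proof.
elim: s => [|y s IH]; first by rewrite seq_set0.
by rewrite seq_cons_set; apply: PU.
Qed.

Lemma CP_supp (f : X -> R) (s : seq X) :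
  (forall x, f x != 0 -> x \in s) -> CP P f.
Proof.
move=> hf; rewrite /CP.
have sub : discont f `<=` [set x | x \in s].
  move=> z /= hz; apply: contrapT => zs; apply: hz.
  have fz : f z = 0 by case: (eqVneq (f z) 0) => // /hf.
  have Hn : nbhs z (~` [set x | x \in s]).
    apply: open_nbhs_nbhs; split => //; rewrite openC; exact: closed_seq.
  rewrite /prop_for /continuous_at.
  rewrite fz; apply: cvg_trans (near_eq_cvg _) (cvg_cst 0).
  apply: filterS Hn => w /= ws; by case: (eqVneq (f w) 0) => // /hf.
change (P (closure (discont f))); apply: (Psub _ _ (P_seq s)); first exact: closed_closure.
rewrite [X in _ `<=` X](closure_id _).1; [exact: closure_subset|exact: closed_seq].
Qed.


Lemma fin_noeth (s : seq X) (hs : forall x, x \in s) : noetherian_sub (@CP X R P).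
Proof.
have CPall : forall f, @CP X R P f by move=> f; apply: (@CP_supp f s) => x _; exact: hs.
move=> I hI hmono.
have mono : forall m n, (m <= n)%N -> I m `<=` I n.
  move=> m n /subnK <-; elim: (n - m)%N => [|k IHk] //.
  by rewrite addSn => f /IHk /hmono.
pose Sup n x := exists f, I n f /\ f x != 0.
have L2 : forall t : seq X, exists N, forall x, x \in t -> forall n, Sup n x -> Sup N x.
  elim => [|y t [N HN]]; first by exists 0%N.
  have [[n0 Hn0]|nS] := pselect (exists n, Sup n y).
    exists (maxn N n0) => x; rewrite in_cons => /orP [/eqP -> | xt] n Hn.
      case: Hn0 => f [If fy]; exists f; split => //; apply: mono If; exact: leq_maxr.
    case: (HN x xt n Hn) => f [If fx]; exists f; split => //; apply: mono If; exact: leq_maxl.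
  exists N => x; rewrite in_cons => /orP [/eqP -> | xt] n Hn.
    by exfalso; apply: nS; exists n.
  exact: (HN x xt n Hn).
have L3 : forall N (t : seq X), exists h, I N h /\ forall x, x \in t -> Sup N x -> h x != 0.
  move=> N; move: (hI N); rewrite /ring_ideal => -[Isub I0 IB IM].
  have IA : forall a b, I N a -> I N b -> I N (fun x => a x + b x).
    move=> a b Ia Ib; have := IB a (fun x => 0 - b x) Ia (IB _ _ I0 Ib).
    by congr (I N _); apply/funext => x; rewrite sub0r opprK.
  elim => [|y t [h [Ih Hh]]]; first by exists (fun _ => 0).
  have [[f [If fy]]|nS] := pselect (Sup N y).
    exists (fun x => h x ^+ 2 + f x ^+ 2); split; first by apply: IA; apply: IM.
    move=> x; rewrite in_cons => /orP [/eqP -> | xt] Sx.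
      by rewrite paddr_eq0 ?sqr_ge0 // !sqrf_eq0 negb_and fy orbT.
    by rewrite paddr_eq0 ?sqr_ge0 // !sqrf_eq0 negb_and Hh.
  exists h; split => // x; rewrite in_cons => /orP [/eqP -> | xt] Sx; [by [] | exact: Hh].
have [N HN] := L2 s.
have [h [Ih Hh]] := L3 N s.
exists N => n leNn; apply/seteqP; split; last exact: mono.
move=> g Ig.
pose q x := if h x == 0 then 0 else g x / h x.
have -> : g = (fun x => q x * h x).
  apply/funext => x; rewrite /q; case: eqVneq => [hx0|hx0]; last by rewrite divfK.
  rewrite mul0r; case: (eqVneq (g x) 0) => // gx.
  by exfalso; move: hx0; apply/eqP; apply: Hh; [exact: hs | apply: (HN x (hs x) n); exists g].
by move: (hI N); rewrite /ring_ideal => -[_ _ _ IM]; apply: IM.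
Qed.

Lemma inf_not_noeth : ~ finite_set [set: X] -> ~ noetherian_sub (@CP X R P).
Proof.
move=> inf noe.
have ex : forall s : seq X, exists y, y \notin s.
  move=> s; apply: contrapT => H; apply: inf.
  suff -> : [set: X] = [set` s] by exact: finite_seq.
  apply/seteqP; split => x //= _.
  by apply: contrapT => /negP xs; apply: H; exists x.
pose pk s := xchoose (ex s).
pose xs n := iter n (fun t => pk t :: t) [::].
pose I n := fun f : X -> R => forall x, f x != 0 -> x \in xs n.
have [||N HN] := noe I.
- move=> n; split.
  + by move=> f If; exact: CP_supp If.
  + by move=> x; rewrite eqxx.
  + move=> a b Ia Ib x; case: (eqVneq (a x) 0) => [ax|/Ia //].
    by case: (eqVneq (b x) 0) => [bx|/Ib //]; rewrite ax bx subrr eqxx.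
  + move=> r a _ Ia x; case: (eqVneq (a x) 0) => [ax|/Ia //].
    by rewrite ax mulr0 eqxx.
- by move=> n f If x /If xn /=; rewrite in_cons xn orbT.
set y := pk (xs N).
pose d := fun x => if x == y then 1 else 0 : R.
have : I N.+1 d.
  move=> x; rewrite /d; case: (eqVneq x y) => [->|]; last by rewrite eqxx.
  by rewrite /= in_cons eqxx.
rewrite HN // => /(_ y); rewrite /d eqxx oner_eq0 => /(_ isT); apply/negP.
exact: xchooseP (ex (xs N)).
Qed.

End S.

Theorem theorem5p11 (R : realType) (X : topologicalType) (P : set (set X)) :
  accessible_space X ->
  closed_ideal P ->
  (forall x : X, P [set x]) ->
  (noetherian_sub (@CP X R P) <-> finite_set [set: X]).
Proof.
move=> T1 [Pcl P0 PU Psub] P1; split.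
  move=> noe; apply: contrapT => inf.
  exact: (@inf_not_noeth R X P T1 P0 PU Psub P1 inf noe).
case/finite_seqP => S hS.
have hs : forall x, x \in S.
  by move=> x; have : [set` S] x by rewrite -hS.
exact: (@fin_noeth R X P T1 P0 PU Psub P1 _ hs).
Qed.
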